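(* Let $a,p,b,q$ be the vertices of a convex quadrilateral in the plane, appearing in this order along its boundary. If $|pa|=|pb|$ and $\angle aqb\geqslant 2\pi/3$, then $|pq|\leqslant \frac{2}{\sqrt{3}}\,|pa|$.
   Context: $|xy|$ denotes the Euclidean distance between points $x$ and $y$; $\angle aqb$ is the angle at $q$ between segments $qa$ and $qb$. *)

(* Defs.v *)
From Stdlib Require Import Reals Lra.
Open Scope R_scope.

Definition point : Type := (R * R)%type.

Definition edist (x y : point) : R :=
  sqrt ((fst x - fst y)^2 + (snd x - snd y)^2).

Definition angle (a q b : point) : R :=
  acos (((fst a - fst q) * (fst b - fst q) + (snd a - snd q) * (snd b - snd q))
        / (edist q a * edist q b)).

Definition turn (x y z : point) : R :=
  (fst y - fst x) * (snd z - snd y) - (snd y - snd x) * (fst z - fst y).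

(* x1 x2 x3 x4 are the vertices of a (non-degenerate) convex quadrilateral,
   listed in this order along its boundary: all four turns are strictly
   in the same direction. *)
Definition convex_quad (x1 x2 x3 x4 : point) : Prop :=
  (0 < turn x1 x2 x3 /\ 0 < turn x2 x3 x4 /\ 0 < turn x3 x4 x1 /\ 0 < turn x4 x1 x2)
  \/
  (turn x1 x2 x3 < 0 /\ turn x2 x3 x4 < 0 /\ turn x3 x4 x1 < 0 /\ turn x4 x1 x2 < 0).

(* Main.v *)
Require Import Defs.
From Stdlib Require Import Reals.
From Stdlib Require Import Lra Psatz.
Open Scope R_scope.

Lemma acos_le t : 2*PI/3 <= acos t -> t <= -1/2.
Proof.
  intro h. destruct (Rle_dec t (-1/2)) as [|n]; auto. exfalso.
  pose proof PI_RGT_0.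
  destruct (Rle_dec 1 t) as [h1|h1].
  - unfold acos in h. destruct (Rle_dec t (-1)); [lra|]. destruct (Rle_dec 1 t); [lra|contradiction].
  - assert (c : cos (acos t) = t) by (apply cos_acos; lra).
    assert (c2 : cos (2*PI/3) = -1/2).
    { replace (2*PI/3) with (PI - PI/3) by field. rewrite Rtrigo_facts.cos_pi_minus, cos_PI3. field. }
    pose proof (acos_bound t).
    destruct (Rle_lt_or_eq _ _ h) as [hl|he].
    + pose proof (cos_decreasing_1 (2*PI/3) (acos t)) as cd.
      assert (cos (acos t) < cos (2*PI/3)) by (apply cd; lra). lra.
    + rewrite <- he in c. lra.
Qed.

Lemma core (d1 d2 w1 w2 z1 z2 s : R) :
  0 < s -> s * s = 3 -> d1*z1 + d2*z2 = 0 ->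
  0 < d1*z2 - d2*z1 -> d1*w2 - d2*w1 < 0 ->
  0 <= (d1*d1+d2*d2) - (w1*w1+w2*w2) + 2*(d1*w2 - d2*w1) * s / 3 ->
  (w1-z1)*(w1-z1)+(w2-z2)*(w2-z2) <= 4/3*((z1+d1)*(z1+d1)+(z2+d2)*(z2+d2)).
Proof.
  intros hs hs2 hp hH hY hA.
  set (N := d1*d1+d2*d2). set (Y := d1*w2 - d2*w1). set (H := d1*z2 - d2*z1).
  fold N Y in hA. fold H in hH. fold Y in hY.
  assert (hN : 0 < N).
  { destruct (Rlt_or_le 0 N) as [h|h]; [exact h|].
    assert (0 <= d1*d1) by apply Rle_0_sqr. assert (0 <= d2*d2) by apply Rle_0_sqr.
    assert (e1 : d1*d1 = 0) by (unfold N in h; lra). assert (e2 : d2*d2 = 0) by (unfold N in h; lra).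
    apply Rmult_integral in e1. apply Rmult_integral in e2.
    assert (d1 = 0) by (destruct e1; auto). assert (d2 = 0) by (destruct e2; auto).
    unfold H in hH. subst. lra. }
  assert (L1 : N * (z1*z1+z2*z2) = H*H).
  { unfold N, H.
    transitivity ((d1*z1+d2*z2)^2 + (d1*z2-d2*z1)^2). ring. rewrite hp. ring. }
  assert (L2 : N * (w1*z1+w2*z2) = Y*H).
  { unfold N, Y, H.
    transitivity ((d1*w1+d2*w2)*(d1*z1+d2*z2) + (d1*w2-d2*w1)*(d1*z2-d2*z1)). ring. rewrite hp. ring. }
  assert (L3 : Y*Y <= N * (w1*w1+w2*w2)).
  { assert (E3 : N * (w1*w1+w2*w2) = (d1*w1+d2*w2)^2 + Y*Y) by (unfold N, Y; ring).
    rewrite E3. assert (0 <= (d1*w1+d2*w2)^2) by (apply pow2_ge_0). lra. }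
  assert (B : 0 <= Y + N*s/3).
  { assert (P : 0 <= (Y + N*s/3) * (N*s - Y)).
    { assert (0 <= N * (N - (w1*w1+w2*w2) + 2*Y*s/3)) by (apply Rmult_le_pos; lra).
      nra. }
    assert (0 < N*s - Y) by nra.
    nra. }
  assert (G : 0 <= N * (4/3*((z1+d1)*(z1+d1)+(z2+d2)*(z2+d2)) - ((w1-z1)*(w1-z1)+(w2-z2)*(w2-z2)))).
  { assert (E : N * (4/3*((z1+d1)*(z1+d1)+(z2+d2)*(z2+d2)) - ((w1-z1)*(w1-z1)+(w2-z2)*(w2-z2)))
       = N * (N - (w1*w1+w2*w2) + 2*Y*s/3) + H*H/3 + N*N/3 + 2*Y*(H - N*s/3)).
    { transitivity (4/3*(N*(z1*z1+z2*z2)) + 4/3*N*N + 8/3 * N*(d1*z1+d2*z2)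
         - N*(w1*w1+w2*w2) + 2*(N*(w1*z1+w2*z2)) - N*(z1*z1+z2*z2)).
      clear -hp. unfold N. field. rewrite L1, L2, hp. clearbody N Y H. field. }
    rewrite E.
    assert (0 <= N * (N - (w1*w1+w2*w2) + 2*Y*s/3)) by (apply Rmult_le_pos; lra).
    destruct (Rle_dec (N*s/3) H).
    - assert (2*Y*(H - N*s/3) >= -2*(N*s/3)*(H - N*s/3)) by nra.
      assert (0 <= (H - N*s)^2) by apply pow2_ge_0.
      assert (E2 : H*H/3 + N*N/3 - 2*(N*s/3)*(H - N*s/3) = (H - N*s)^2/3).
      { clearbody N Y H. transitivity (H*H/3 + N*N/3 - 2*N*s*H/3 + 2*N*N*(s*s)/9); [field|]. replace ((H - N*s)^2) with (H*H - 2*N*s*H + N*N*(s*s)) by ring. rewrite hs2. field. }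
      lra.
    - assert (H - N*s/3 < 0) by (apply Rnot_le_lt in n; lra). assert (0 <= 2*Y*(H - N*s/3)) by nra. assert (0 <= H*H) by apply Rle_0_sqr. assert (0 <= N*N) by apply Rle_0_sqr. lra. }
  assert (0 <= 4/3*((z1+d1)*(z1+d1)+(z2+d2)*(z2+d2)) - ((w1-z1)*(w1-z1)+(w2-z2)*(w2-z2))).
  { apply (Rmult_le_reg_l N); lra. }
  lra.
Qed.

Lemma pow2_gt_0' x : x <> 0 -> 0 < x^2.
Proof. intro h. replace (x^2) with (Rsqr x) by (unfold Rsqr; ring). apply Rsqr_pos_lt; auto. Qed.

Lemma sumsq_pos x y : (x = 0 /\ y = 0) \/ 0 < x^2 + y^2.
Proof.
  destruct (Req_dec x 0) as [ex|ex]; destruct (Req_dec y 0) as [ey|ey]; auto; right.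
  - assert (0 < y^2) by (apply pow2_gt_0'; auto). subst; lra.
  - assert (0 < x^2) by (apply pow2_gt_0'; auto). subst; lra.
  - assert (0 < y^2) by (apply pow2_gt_0'; auto). assert (0 < x^2) by (apply pow2_gt_0'; auto). lra.
Qed.

Theorem lemma2 (a p b q : point) :
  convex_quad a p b q ->
  edist p a = edist p b ->
  2 * PI / 3 <= angle a q b ->
  edist p q <= 2 / sqrt 3 * edist p a.
Proof.
  destruct a as [a1 a2], p as [p1 p2], b as [b1 b2], q as [q1 q2].
  unfold convex_quad, turn, angle, edist; cbn [fst snd].
  intros hc he ha.
  set (s := sqrt 3).
  assert (hs : 0 < s) by (apply sqrt_lt_R0; lra).
  assert (hs2 : s * s = 3) by (apply sqrt_sqrt; lra).
  assert (hpe : (p1-a1)^2+(p2-a2)^2 = (p1-b1)^2+(p2-b2)^2).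
  { apply sqrt_inj; try (apply Rplus_le_le_0_compat; apply pow2_ge_0). exact he. }
  assert (hQA : 0 < (q1-a1)^2+(q2-a2)^2).
  { destruct (sumsq_pos (q1-a1) (q2-a2)) as [[e1 e2]|h]; auto.
    assert (q1 = a1) by lra. assert (q2 = a2) by lra. subst. exfalso.
    destruct hc as [[_ [_ [h _]]]|[_ [_ [h _]]]]; ring_simplify in h; lra. }
  assert (hQB : 0 < (q1-b1)^2+(q2-b2)^2).
  { destruct (sumsq_pos (q1-b1) (q2-b2)) as [[e1 e2]|h]; auto.
    assert (q1 = b1) by lra. assert (q2 = b2) by lra. subst. exfalso.
    destruct hc as [[_ [h _]]|[_ [h _]]]; ring_simplify in h; lra. }
  set (D := (a1 - q1) * (b1 - q1) + (a2 - q2) * (b2 - q2)) in ha.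
  set (C := (a1 - q1) * (b2 - q2) - (a2 - q2) * (b1 - q1)).
  assert (hqa : sqrt ((q1 - a1) ^ 2 + (q2 - a2) ^ 2) * sqrt ((q1 - a1) ^ 2 + (q2 - a2) ^ 2) = (q1 - a1) ^ 2 + (q2 - a2) ^ 2) by (apply sqrt_sqrt; lra).
  assert (hqb : sqrt ((q1 - b1) ^ 2 + (q2 - b2) ^ 2) * sqrt ((q1 - b1) ^ 2 + (q2 - b2) ^ 2) = (q1 - b1) ^ 2 + (q2 - b2) ^ 2) by (apply sqrt_sqrt; lra).
  set (SA := sqrt ((q1 - a1) ^ 2 + (q2 - a2) ^ 2)) in *.
  set (SB := sqrt ((q1 - b1) ^ 2 + (q2 - b2) ^ 2)) in *.
  assert (hSA : 0 < SA) by (apply sqrt_lt_R0; lra).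
  assert (hSB : 0 < SB) by (apply sqrt_lt_R0; lra).
  apply acos_le in ha.
  assert (hD : D <= - (SA*SB) / 2).
  { assert (0 < SA*SB) by nra.
    assert (D = D / (SA*SB) * (SA*SB)) by (field; lra).
    assert (D / (SA*SB) * (SA*SB) <= -1/2 * (SA*SB)) by (apply Rmult_le_compat_r; lra).
    lra. }
  assert (hL : (SA*SB)*(SA*SB) = D*D + C*C).
  { transitivity ((SA*SA)*(SB*SB)); [ring|]. rewrite hqa, hqb. unfold D, C. ring. }
  assert (eD : D = (a1 - q1) * (b1 - q1) + (a2 - q2) * (b2 - q2)) by reflexivity.
  assert (eC : C = (a1 - q1) * (b2 - q2) - (a2 - q2) * (b1 - q1)) by reflexivity.
  clearbody D C SA SB.
  assert (h3 : C*C <= 3*(D*D)).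
  { assert (0 <= SA*SB) by nra. assert (0 <= (-2*D - SA*SB)*(-2*D + SA*SB)) by (apply Rmult_le_pos; lra). assert (E : (-2*D - SA*SB)*(-2*D + SA*SB) = 4*(D*D) - (SA*SB)*(SA*SB)) by ring. lra. }
  assert (hDC : Rabs C * s <= 3 * (-D)).
  { assert (0 < SA*SB) by nra. apply Rsqr_incr_0_var; [|lra]. unfold Rsqr.
    replace (Rabs C * s * (Rabs C * s)) with ((Rabs C * Rabs C) * (s*s)) by ring.
    rewrite <- Rabs_mult, Rabs_pos_eq by nra. rewrite hs2. nra. }
  assert (hPA : 0 <= (p1 - a1) ^ 2 + (p2 - a2) ^ 2) by (apply Rplus_le_le_0_compat; apply pow2_ge_0).
  assert (hPQ : 0 <= (p1 - q1) ^ 2 + (p2 - q2) ^ 2) by (apply Rplus_le_le_0_compat; apply pow2_ge_0).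
  enough (key : (p1 - q1) ^ 2 + (p2 - q2) ^ 2 <= 4/3 * ((p1 - a1) ^ 2 + (p2 - a2) ^ 2)).
  { apply Rsqr_incr_0_var.
    - unfold Rsqr. rewrite sqrt_sqrt by lra.
      replace (2 / s * sqrt ((p1 - a1) ^ 2 + (p2 - a2) ^ 2) * (2 / s * sqrt ((p1 - a1) ^ 2 + (p2 - a2) ^ 2)))
        with (4 / (s*s) * (sqrt ((p1 - a1) ^ 2 + (p2 - a2) ^ 2) * sqrt ((p1 - a1) ^ 2 + (p2 - a2) ^ 2))) by (field; lra).
      rewrite sqrt_sqrt by lra. rewrite hs2. lra.
    - apply Rmult_le_pos; [apply Rlt_le; apply Rdiv_lt_0_compat; lra|apply sqrt_pos]. }
  set (T1 := (p1 - a1) * (b2 - p2) - (p2 - a2) * (b1 - p1)) in hc.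
  set (T3 := (q1 - b1) * (a2 - q2) - (q2 - b2) * (a1 - q1)) in hc.
  assert (eT1 : T1 = (p1 - a1) * (b2 - p2) - (p2 - a2) * (b1 - p1)) by reflexivity.
  assert (eT3 : T3 = (q1 - b1) * (a2 - q2) - (q2 - b2) * (a1 - q1)) by reflexivity.
  clearbody T1 T3.
  assert (hT : (0 < T1 /\ 0 < T3) \/ (T1 < 0 /\ T3 < 0)) by (destruct hc as [[? [? [? ?]]]|[? [? [? ?]]]]; [left|right]; split; assumption).
  clear hc.
  assert (EC : C = 2 * T3 / 2) by (rewrite eC, eT3; field).
  assert (Egoal : (p1 - q1) ^ 2 + (p2 - q2) ^ 2 =
     ((q1-(a1+b1)/2) - (p1-(a1+b1)/2))*((q1-(a1+b1)/2) - (p1-(a1+b1)/2)) +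
     ((q2-(a2+b2)/2) - (p2-(a2+b2)/2))*((q2-(a2+b2)/2) - (p2-(a2+b2)/2))) by field.
  rewrite Egoal.
  destruct hT as [[h1 hT3]|[h1 hT3]].
  - (* T1 > 0 : H < 0, Y > 0 : use -d *)
    assert (K := core (-((b1-a1)/2)) (-((b2-a2)/2)) (q1-(a1+b1)/2) (q2-(a2+b2)/2) (p1-(a1+b1)/2) (p2-(a2+b2)/2) s hs hs2).
    assert (Eb : (p1 - a1) ^ 2 + (p2 - a2) ^ 2 =
      ((p1-(a1+b1)/2) + -((b1-a1)/2))*((p1-(a1+b1)/2) + -((b1-a1)/2)) +
      ((p2-(a2+b2)/2) + -((b2-a2)/2))*((p2-(a2+b2)/2) + -((b2-a2)/2))) by (rewrite hpe; field).
    rewrite Eb. apply K.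
    + replace (-((b1-a1)/2) * (p1-(a1+b1)/2) + -((b2-a2)/2) * (p2-(a2+b2)/2))
        with (((p1-b1)^2+(p2-b2)^2 - ((p1-a1)^2+(p2-a2)^2))/4) by field.
      rewrite hpe. field.
    + replace (-((b1-a1)/2) * (p2-(a2+b2)/2) - -((b2-a2)/2) * (p1-(a1+b1)/2)) with (T1/2) by (rewrite eT1; field). lra.
    + replace (-((b1-a1)/2) * (q2-(a2+b2)/2) - -((b2-a2)/2) * (q1-(a1+b1)/2)) with (-T3/2) by (rewrite eT3; field). lra.
    + rewrite Rabs_pos_eq in hDC by lra.
      replace (-((b1-a1)/2) * (q2-(a2+b2)/2) - -((b2-a2)/2) * (q1-(a1+b1)/2)) with (-C/2) by (rewrite eC; field).
      replace (- ((b1 - a1) / 2) * - ((b1 - a1) / 2) + - ((b2 - a2) / 2) * - ((b2 - a2) / 2) -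
        ((q1 - (a1 + b1) / 2) * (q1 - (a1 + b1) / 2) + (q2 - (a2 + b2) / 2) * (q2 - (a2 + b2) / 2))) with (-D) by (rewrite eD; field).
      lra.
  - assert (K := core ((b1-a1)/2) ((b2-a2)/2) (q1-(a1+b1)/2) (q2-(a2+b2)/2) (p1-(a1+b1)/2) (p2-(a2+b2)/2) s hs hs2).
    assert (Eb : (p1 - a1) ^ 2 + (p2 - a2) ^ 2 =
      ((p1-(a1+b1)/2) + ((b1-a1)/2))*((p1-(a1+b1)/2) + ((b1-a1)/2)) +
      ((p2-(a2+b2)/2) + ((b2-a2)/2))*((p2-(a2+b2)/2) + ((b2-a2)/2))) by field.
    rewrite Eb. apply K.
    + replace (((b1-a1)/2) * (p1-(a1+b1)/2) + ((b2-a2)/2) * (p2-(a2+b2)/2))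
        with (((p1-a1)^2+(p2-a2)^2 - ((p1-b1)^2+(p2-b2)^2))/4) by field.
      rewrite hpe. field.
    + replace (((b1-a1)/2) * (p2-(a2+b2)/2) - ((b2-a2)/2) * (p1-(a1+b1)/2)) with (-T1/2) by (rewrite eT1; field). lra.
    + replace (((b1-a1)/2) * (q2-(a2+b2)/2) - ((b2-a2)/2) * (q1-(a1+b1)/2)) with (T3/2) by (rewrite eT3; field). lra.
    + rewrite Rabs_left in hDC by lra.
      replace (((b1-a1)/2) * (q2-(a2+b2)/2) - ((b2-a2)/2) * (q1-(a1+b1)/2)) with (C/2) by (rewrite eC; field).
      replace (((b1 - a1) / 2) * ((b1 - a1) / 2) + ((b2 - a2) / 2) * ((b2 - a2) / 2) -
        ((q1 - (a1 + b1) / 2) * (q1 - (a1 + b1) / 2) + (q2 - (a2 + b2) / 2) * (q2 - (a2 + b2) / 2))) with (-D) by (rewrite eD; field).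
      lra.
Qed.
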